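(* Let $\mathbf{F}_q$ have characteristic $p$ and let $1\le k\le q$. If $p\nmid k$, then $M(k,b,\mathbf{F}_q)=M(k,0,\mathbf{F}_q)=\frac1q(q)_k$ for all $b\in\mathbf{F}_q$. If $p\mid k$, then $M(k,b,\mathbf{F}_q)=q\,M(k-1,b,\mathbf{F}_q^* )$ for all $b\in\mathbf{F}_q$.
   Context: $M(k,b,D)$ denotes the number of ordered $k$-tuples $(x_1,\dots,x_k)$ of pairwise distinct elements of $D\subseteq\mathbf{F}_q$ with $x_1+\dots+x_k=b$. $(x)_k=x(x-1)\cdots(x-k+1)$. *)

(* Defs.v *)
From HB Require Import structures.
From mathcomp Require Import all_boot all_order all_algebra all_field.
Set Implicit Arguments. Unset Strict Implicit. Unset Printing Implicit Defensive.
Import GRing.Theory.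

Definition M (F : finFieldType) (k : nat) (b : F) (D : {set F}) : nat :=
  #|[set t : k.-tuple F | [&& uniq t, all (fun x => x \in D) t
                             & (\sum_(x <- t) x == b)%R]]|.

Definition Fstar (F : finFieldType) : {set F} := [set x : F | x != 0%R].

(* Main.v *)
Require Import Defs.
From HB Require Import structures.
From mathcomp Require Import all_boot all_order all_algebra all_field.
Import GRing.Theory.
Local Open Scope ring_scope.

Section Aux.
Variable F : finFieldType.

Lemma sum_shift (s : seq F) c :
  \sum_(x <- map (fun x => x + c) s) x = \sum_(x <- s) x + (size s)%:R * c.
Proof.
elim: s => [|x s IH]; first by rewrite !big_nil mul0r addr0.
rewrite /= !big_cons IH /= -addn1 natrD mulrDl mul1r.
by rewrite -!addrA; congr (_ + _); rewrite addrC -addrA.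
Qed.

Lemma uniq_shift (s : seq F) c : uniq (map (fun x => x + c) s) = uniq s.
Proof. by apply: map_inj_uniq => x y /addIr. Qed.

Definition Sset k (b : F) (D : {set F}) : {set k.-tuple F} :=
  [set t : k.-tuple F | [&& uniq t, all (fun x => x \in D) t
                             & (\sum_(x <- t) x == b)%R]].

Definition tr k (c : F) (t : k.-tuple F) : k.-tuple F := [tuple of map (fun x => x + c) t].

Arguments tr {k}.
Lemma tr_in k (b c : F) (t : k.-tuple F) :
  (tr c t \in Sset k (b + k%:R * c) setT) = (t \in Sset k b setT).
Proof.
rewrite !inE /tr /= uniq_shift sum_shift size_tuple.
rewrite (inj_eq (addIr _)); congr (_ && (_ && _)).
by rewrite all_map; apply: eq_all => x /=; rewrite !inE.
Qed.

Lemma trK k c : cancel (@tr k c) (@tr k (- c)).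
Proof. by move=> t; apply: val_inj; rewrite /= -map_comp map_id_in // => x _ /=; rewrite addrK. Qed.

Lemma M_shift k (b c : F) : M k (b + k%:R * c) setT = M k b setT.
Proof.
rewrite /M -/(Sset k (b + k%:R * c) setT) -/(Sset k b setT).
have -> : Sset k (b + k%:R * c) setT = tr c @: Sset k b setT.
  apply/setP => y; apply/idP/imsetP.
    move=> Hy; exists (tr (- c) y); last by rewrite -{1}(trK _ (-c) y) opprK.
    by rewrite -(tr_in _ _ c); have := trK _ (-c) y; rewrite opprK => ->.
  by case=> t Ht ->; rewrite tr_in.
by rewrite card_imset //; apply: can_inj (trK _ c).
Qed.

End Aux.

Arguments tr {F k}.
Section Aux2.
Variable F : finFieldType.
Local Open Scope nat_scope.

Lemma sum_M k : \sum_(b : F) M k b setT = #|F| ^_ k.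
Proof.
have := card_uniq_tuples k (@predT F); rewrite cardT -cardE => <-.
rewrite -sum1_card (partition_big (fun t : k.-tuple F => (\sum_(x <- t) x)%R) predT) //=.
apply: eq_bigr => b _; rewrite /M -sum1_card; apply: eq_bigl => t.
rewrite !inE all_predT.
have -> : all (fun x => x \in [set: F]) t by apply/allP => x _; rewrite inE.
by rewrite andbA andbT.
Qed.

Lemma all_Fstar (y : seq F) : all (fun x => x \in Fstar F) y = (0%R \notin y).
Proof. by elim: y => //= x y ->; rewrite inE in_cons negb_or eq_sym. Qed.

Definition fcons n (p : F * n.-tuple F) : n.+1.-tuple F := cons_tuple p.1 (tr p.1 p.2).

Lemma fcons_in n (b c : F) (y : n.-tuple F) : (n.+1%:R = 0 :> F)%R ->
  (@fcons n (c, y) \in Sset F n.+1 b setT) = (y \in Sset F n b (Fstar F)).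
Proof.
move=> hk; rewrite !inE /fcons /= uniq_shift all_Fstar.
have -> : all (fun x => x \in [set: F]) (tr c y) by apply/allP => x _; rewrite inE.
rewrite big_cons sum_shift size_tuple.
have -> : (c + (\sum_(x <- y) x + n%:R * c) = \sum_(x <- y) x)%R.
  by rewrite addrCA -{1}(mul1r c) -mulrDl nat1r hk mul0r addr0.
have -> : (c \in tr c y) = (0%R \in y).
  by rewrite -{1}(add0r c) /tr /= (mem_map (addIr c)).
by rewrite in_setT andbT; case: (_ \notin _); case: (uniq _).
Qed.

Lemma fcons_inj n : injective (@fcons n).
Proof.
move=> [c y] [c' y'] H.
have := congr1 val H; rewrite /fcons /= => -[Ec Ey].
subst c'; congr (_, _); apply: (can_inj (trK F n c)); apply: val_inj; exact: Ey.
Qed.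

End Aux2.

Local Close Scope ring_scope.

Theorem lemma2p3 (F : finFieldType) (p k : nat) :
  p \in [pchar F]%R -> 1 <= k <= #|F| ->
  (~~ (p %| k) ->
     forall b : F,
       M k b [set: F] = M k 0%R [set: F] /\ #|F| * M k b [set: F] = #|F| ^_ k)
  /\
  (p %| k ->
     forall b : F, M k b [set: F] = #|F| * M k.-1 b (Fstar F)).
Proof.
move=> Hp /andP[k1 _]; split.
  move=> ndk b.
  have kR : ((k%:R : F) != 0)%R by rewrite -(GRing.dvdn_pcharf Hp).
  have Mb : forall b' : F, M k b' setT = M k (0 : F)%R setT.
    move=> b'; rewrite -(@M_shift F k 0%R (b' / k%:R)%R); congr M.
    by rewrite add0r mulrC divfK.
  split; first exact: Mb.
  rewrite -(sum_M F k) (eq_bigr (fun _ => M k b setT)); last by move=> i _; rewrite !Mb.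
  by rewrite sum_nat_const cardT -cardE.
move=> dk b; case: k k1 dk => [//|n] _ dk /=.
have hk : ((n.+1)%:R = 0 :> F)%R by apply/eqP; rewrite -(GRing.dvdn_pcharf Hp).
rewrite /M -/(Sset F n.+1 b setT) -/(Sset F n b (Fstar F)).
have -> : Sset F n.+1 b setT = @fcons F n @: setX setT (Sset F n b (Fstar F)).
  apply/setP => t; apply/idP/imsetP.
    case/tupleP: t => c y Ht.
    have T : tr c (tr (- c)%R y) = y by have := trK F n (- c)%R y; rewrite opprK.
    have E : fcons F n (c, tr (- c)%R y) = [tuple of c :: y].
      by apply: val_inj; rewrite /fcons T.
    exists (c, tr (- c)%R y); last by rewrite E.
    by rewrite inE in_setT /= -(@fcons_in F n b c _ hk) E.
  case=> [[c y]]; rewrite inE /= => /andP[_ Hy] ->.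
  by rewrite fcons_in.
by rewrite card_imset ?cardsX ?cardsT //; apply: fcons_inj.
Qed.
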